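(* Let $p, \sigma \in \mathbb{R}$. The equation \[ -u''(x) = |x|^\sigma u(x)^p \quad \text{in } \mathbb{R} \] admits at least one non-trivial, non-negative classical solution if and only if one of the following holds: (1) $\sigma < -2$ and $p > -1-\sigma$; or (2) $-2 < \sigma < 0$ and $p < -1-\sigma$.
   Context: A classical solution is a function $u$ belonging to $C^2(\mathbb{R})$ if $\sigma \geq 0$, and to $C(\mathbb{R}) \cap C^2(\mathbb{R} \setminus \{0\})$ if $\sigma < 0$, such that the equation holds pointwise for all $x \in \mathbb{R}$ when $\sigma \geq 0$ and for all $x \neq 0$ when $\sigma < 0$. For $p=0$ the term $u^p$ is understood as $1$, and for $p<0$ it is required that $u>0$ at each point where the equation is imposed. *)

(* Defs.v *)
From Stdlib Require Import Reals.
From Coquelicot Require Import Coquelicot.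
Open Scope R_scope.

(* Real power x^y for x >= 0, with conventions 0^0 = 1 and 0^y = 0 for y <> 0.
   (For y < 0 the value at 0 is never used: the solution notion requires u > 0
   wherever the equation is imposed, and |x|^sigma at x = 0 is only used when
   sigma >= 0.) *)
Definition rpow (x y : R) : R :=
  if Req_EM_T x 0 then (if Req_EM_T y 0 then 1 else 0) else Rpower x y.

Definition C2_on (D : R -> Prop) (u u1 u2 : R -> R) : Prop :=
  forall x, D x ->
    is_derive u x (u1 x) /\ is_derive u1 x (u2 x) /\ continuous u2 x.

Definition eq_domain (sigma : R) (x : R) : Prop := 0 <= sigma \/ x <> 0.

Definition classical_solution (p sigma : R) (u : R -> R) : Prop :=
  (forall x, continuous u x) /\
  exists u1 u2 : R -> R,
    C2_on (eq_domain sigma) u u1 u2 /\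
    forall x, eq_domain sigma x ->
      (p < 0 -> 0 < u x) /\
      - u2 x = rpow (Rabs x) sigma * rpow (u x) p.

(* Main.v *)
Require Import Defs.
From Stdlib Require Import Reals.
From Coquelicot Require Import Coquelicot.
Open Scope R_scope.
From Stdlib Require Import Lra.


Lemma exp_le' x y : x <= y -> exp x <= exp y.
Proof. intros [H|H]; [left; apply exp_increasing; auto | subst; lra]. Qed.

Lemma rp_pos x a : 0 < Rpower x a.
Proof. unfold Rpower; apply exp_pos. Qed.

Lemma rpow_nonneg x a : 0 <= rpow x a.
Proof. unfold rpow. destruct Req_EM_T; [destruct Req_EM_T; lra|left; apply rp_pos]. Qed.

Lemma rpow_pos x a : 0 < x -> rpow x a = Rpower x a.
Proof. intros. unfold rpow. destruct Req_EM_T; [lra|auto]. Qed.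

Lemma rp_base_le a b c : 0 <= c -> 0 < a <= b -> Rpower a c <= Rpower b c.
Proof. intros; apply Rle_Rpower_l; auto. Qed.

Lemma rp_base_le_neg a b c : c <= 0 -> 0 < a <= b -> Rpower b c <= Rpower a c.
Proof. intros Hc [Ha Hab]. unfold Rpower. apply exp_le'.
  assert (ln a <= ln b) by (apply ln_le; lra). nra. Qed.

Lemma rp_exp_le x a b : 1 <= x -> a <= b -> Rpower x a <= Rpower x b.
Proof. intros; apply Rle_Rpower; auto. Qed.

Lemma rp_mult_base x y a : 0 < x -> 0 < y -> Rpower (x*y) a = Rpower x a * Rpower y a.
Proof. intros; rewrite Rpower_mult_distr; auto. Qed.

Lemma rp_one a : Rpower 1 a = 1.
Proof. unfold Rpower. rewrite ln_1, Rmult_0_r, exp_0. auto. Qed.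

Lemma mono_dec (h dh : R -> R) a b : a <= b ->
  (forall t, a <= t <= b -> is_derive h t (dh t)) ->
  (forall t, a <= t <= b -> dh t <= 0) -> h b <= h a.
Proof.
  intros Hab Hd Hs.
  destruct (MVT_gen h a b dh) as [c [Hc Heq]].
  - intros x Hx. rewrite Rmin_left, Rmax_right in Hx by lra. apply Hd; lra.
  - intros x Hx. rewrite Rmin_left, Rmax_right in Hx by lra.
    apply derivable_continuous_pt. exists (dh x). apply is_derive_Reals. apply Hd; lra.
  - rewrite Rmin_left, Rmax_right in Hc by lra.
    assert (dh c <= 0) by (apply Hs; lra). nra.
Qed.

Lemma mono_inc (h dh : R -> R) a b : a <= b ->
  (forall t, a <= t <= b -> is_derive h t (dh t)) ->
  (forall t, a <= t <= b -> 0 <= dh t) -> h a <= h b.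
Proof.
  intros Hab Hd Hs.
  assert (- h b <= - h a); [|lra].
  apply (mono_dec (fun t => - h t) (fun t => - dh t)); auto.
  - intros t Ht. apply (is_derive_opp h). auto.
  - intros t Ht. specialize (Hs t Ht). lra.
Qed.

Lemma is_derive_rp a t : 0 < t -> is_derive (fun t => Rpower t a) t (a * Rpower t (a-1)).
Proof. intros. apply is_derive_Reals. apply derivable_pt_lim_power. auto. Qed.

Lemma rp_inv t : 0 < t -> Rpower t (-1) = / t.
Proof. intros. replace (-1) with (- (1)) by ring. rewrite Rpower_Ropp, Rpower_1; auto. Qed.

Lemma rp_x t a : 0 < t -> t * Rpower t a = Rpower t (a+1).
Proof. intros. rewrite Rpower_plus, Rpower_1; auto. ring. Qed.

Lemma rp_split u p : 0 < u -> u = Rpower u (1-p) * Rpower u p.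
Proof. intros. rewrite <- Rpower_plus. replace (1-p+p) with 1 by ring. rewrite Rpower_1; auto. Qed.

Lemma rp_inv_pow e a : 0 < e -> a <> 0 -> Rpower (Rpower e (/a)) a = e.
Proof. intros. rewrite Rpower_mult. rewrite Rinv_l by auto. apply Rpower_1; auto. Qed.

Lemma small_pow a e x : a < 0 -> 0 < e -> exists y, x <= y /\ 0 < y /\ Rpower y a <= e.
Proof.
  intros Ha He. exists (Rmax x (Rpower e (/a))). split; [apply Rmax_l|].
  assert (0 < Rpower e (/a)) by apply rp_pos.
  assert (Rpower e (/a) <= Rmax x (Rpower e (/a))) by apply Rmax_r.
  split; [lra|].
  rewrite <- (rp_inv_pow e a) at 2 by lra. apply rp_base_le_neg; lra.
Qed.

Lemma is_derive_lin c t : is_derive (fun t => c * t) t c.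
Proof. auto_derive; [auto | ring]. Qed.

Definition HalfSol (sigma p : R) (u u1 u2 : R -> R) : Prop :=
  forall x, 0 < x -> is_derive u x (u1 x) /\ is_derive u1 x (u2 x) /\ 0 < u x /\
    u2 x = - (Rpower x sigma * Rpower (u x) p).

Lemma hs_u2 sigma p u u1 u2 : HalfSol sigma p u u1 u2 -> forall x, 0 < x -> u2 x <= 0.
Proof. intros H x Hx. destruct (H x Hx) as [_ [_ [_ E]]]. rewrite E.
  pose proof (rp_pos x sigma). pose proof (rp_pos (u x) p). nra. Qed.

Lemma hs_u1_noninc sigma p u u1 u2 : HalfSol sigma p u u1 u2 ->
  forall x y, 0 < x <= y -> u1 y <= u1 x.
Proof. intros H x y Hxy. apply (mono_dec u1 u2); try lra.
  - intros t Ht. apply H; lra.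
  - intros t Ht. apply (hs_u2 _ _ _ _ _ H); lra. Qed.

Lemma hs_tan sigma p u u1 u2 : HalfSol sigma p u u1 u2 ->
  forall x y, 0 < x <= y -> u y <= u x + u1 x * (y - x).
Proof. intros H x y Hxy.
  assert (u y - u1 x * y <= u x - u1 x * x); [|lra].
  apply (mono_dec (fun t => u t - u1 x * t) (fun t => u1 t - u1 x)); try lra.
  - intros t Ht. apply (is_derive_minus u (fun t => u1 x * t)). apply H; lra.
    apply is_derive_lin.
  - intros t Ht. assert (u1 t <= u1 x) by (apply (hs_u1_noninc _ _ _ _ _ H); lra). lra.
Qed.

Lemma hs_tan' sigma p u u1 u2 : HalfSol sigma p u u1 u2 ->
  forall x y, 0 < x <= y -> u x + u1 y * (y - x) <= u y.
Proof. intros H x y Hxy.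
  assert (u x - u1 y * x <= u y - u1 y * y); [|lra].
  apply (mono_inc (fun t => u t - u1 y * t) (fun t => u1 t - u1 y)); try lra.
  - intros t Ht. apply (is_derive_minus u (fun t => u1 y * t)). apply H; lra.
    apply is_derive_lin.
  - intros t Ht. assert (u1 y <= u1 t) by (apply (hs_u1_noninc _ _ _ _ _ H); lra). lra.
Qed.


Lemma hs_u_nondec sigma p u u1 u2 : HalfSol sigma p u u1 u2 ->
  (forall x, 0 < x -> 0 <= u1 x) -> forall x y, 0 < x <= y -> u x <= u y.
Proof. intros H P x y Hxy. apply (mono_inc u u1); try lra.
  - intros t Ht; apply H; lra.
  - intros t Ht; apply P; lra. Qed.

Lemma hs_LN sigma p u u1 u2 : HalfSol sigma p u u1 u2 ->
  (forall x, 0 < x -> 0 <= u1 x) ->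
  forall m, 0 < m -> (forall t, 1 <= t -> m / t <= Rpower t sigma * Rpower (u t) p) -> False.
Proof.
  intros H P m Hm Hb.
  set (T := exp ((u1 1 + 1) / m)).
  assert (HT : 1 <= T). { unfold T. 
    assert (0 <= u1 1) by (apply P; lra).
    assert (0 <= (u1 1 + 1) / m) by (apply Rmult_le_pos; [lra| left; apply Rinv_0_lt_compat; lra]).
    pose proof (exp_ineq1_le ((u1 1 + 1) / m)). lra. }
  assert (u1 T + m * ln T <= u1 1 + m * ln 1).
  { apply (mono_dec (fun t => u1 t + m * ln t) (fun t => u2 t + m * / t)); auto.
    - intros t Ht. apply (is_derive_plus u1 (fun t => m * ln t)). apply H; lra.
      apply (is_derive_scal ln). apply is_derive_ln; lra.
    - intros t Ht. destruct (H t) as [_ [_ [_ E]]]; [lra|]. rewrite E.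
      specialize (Hb t (proj1 Ht)). unfold Rdiv in Hb. lra. }
  unfold T in *. rewrite ln_exp, ln_1 in H0.
  assert (0 <= u1 (exp ((u1 1 + 1) / m))) by (apply P; apply exp_pos).
  assert (m * ((u1 1 + 1) / m) = u1 1 + 1) by (field; lra). lra.
Qed.

Lemma hs_LN2 sigma p u u1 u2 : HalfSol sigma p u u1 u2 ->
  forall m B, 0 < m -> (forall t, 1 <= t -> m / t <= u1 t) -> (forall t, 1 <= t -> u t <= B) -> False.
Proof.
  intros H m B Hm Hb HB.
  set (T := exp (Rabs (B - u 1 + 1) / m)).
  assert (HT : 1 <= T). { unfold T.
    assert (0 <= Rabs (B - u 1 + 1) / m) by (apply Rmult_le_pos; [apply Rabs_pos| left; apply Rinv_0_lt_compat; lra]).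
    pose proof (exp_ineq1_le (Rabs (B - u 1 + 1) / m)). lra. }
  assert (u 1 - m * ln 1 <= u T - m * ln T).
  { apply (mono_inc (fun t => u t - m * ln t) (fun t => u1 t - m * / t)); auto.
    - intros t Ht. apply (is_derive_minus u (fun t => m * ln t)). apply H; lra.
      apply (is_derive_scal ln). apply is_derive_ln; lra.
    - intros t Ht. specialize (Hb t (proj1 Ht)). unfold Rdiv in Hb. lra. }
  unfold T in *. rewrite ln_exp, ln_1 in H0.
  assert (m * (Rabs (B - u 1 + 1) / m) = Rabs (B - u 1 + 1)) by (field; lra).
  specialize (HB T HT). pose proof (Rle_abs (B - u 1 + 1)). unfold T in HB. lra.
Qed.

Lemma hs_K sigma p u u1 u2 : HalfSol sigma p u u1 u2 ->
  (forall x, 0 < x -> 0 <= u1 x) -> sigma < -1 -> 0 <= p ->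
  forall x, 0 < x -> / (- sigma - 1) * Rpower (u x) p * Rpower x (sigma + 1) <= u1 x.
Proof.
  intros H P Hs Hp x Hx.
  set (A := Rpower (u x) p). set (k := / (- sigma - 1)).
  assert (Hk : 0 < k) by (unfold k; apply Rinv_0_lt_compat; lra).
  assert (HA : 0 < A) by apply rp_pos.
  assert (Hy : forall y, x <= y -> k * A * (Rpower x (sigma+1) - Rpower y (sigma+1)) <= u1 x).
  { intros y Hxy.
    assert (u1 y + A / (sigma+1) * Rpower y (sigma+1) <= u1 x + A / (sigma+1) * Rpower x (sigma+1)).
    { apply (mono_dec (fun t => u1 t + A / (sigma+1) * Rpower t (sigma+1))
        (fun t => u2 t + A / (sigma+1) * ((sigma+1) * Rpower t (sigma+1-1)))); auto.
      - intros t Ht. apply (is_derive_plus u1 (fun t => A / (sigma+1) * Rpower t (sigma+1))).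
        apply H; lra.
        apply (is_derive_scal (fun t => Rpower t (sigma+1))). apply is_derive_rp; lra.
      - intros t Ht. destruct (H t) as [_ [_ [Hut E]]]; [lra|]. rewrite E.
        replace (sigma + 1 - 1) with sigma by ring.
        assert (u x <= u t) by (apply (hs_u_nondec _ _ _ _ _ H P); lra).
        assert (A <= Rpower (u t) p) by (apply rp_base_le; [lra|]; destruct (H x Hx) as [_ [_ [? _]]]; lra).
        pose proof (rp_pos t sigma).
        replace (A / (sigma + 1) * ((sigma + 1) * Rpower t sigma)) with (A * Rpower t sigma) by (field; lra).
        nra. }
    assert (0 <= u1 y) by (apply P; lra).
    assert (k * A * (Rpower x (sigma + 1) - Rpower y (sigma + 1)) =
            A / (sigma+1) * Rpower y (sigma+1) - A / (sigma+1) * Rpower x (sigma+1)) by (unfold k; field; lra).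
    lra. }
  fold A k.
  destruct (Rle_or_lt (k * A * Rpower x (sigma + 1)) (u1 x)) as [|Hlt]; auto.
  exfalso.
  destruct (small_pow (sigma+1) ((k * A * Rpower x (sigma + 1) - u1 x) / (2*(k*A))) x) as [y [Hy1 [Hy2 Hy3]]]; [lra| |].
  { apply Rdiv_lt_0_compat; nra. }
  specialize (Hy y Hy1).
  assert (k * A * Rpower y (sigma+1) <= k * A * ((k * A * Rpower x (sigma + 1) - u1 x) / (2*(k * A)))).
  { apply Rmult_le_compat_l; nra. }
  replace (k * A * ((k * A * Rpower x (sigma + 1) - u1 x) / (2*(k * A)))) with ((k * A * Rpower x (sigma + 1) - u1 x)/2) in H0
    by (field; nra).
  nra.
Qed.

Lemma bound_helper sigma p t M Y : 1 <= t -> 0 < M -> -1 <= sigma + p ->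
  Rpower M p * Rpower t p <= Y -> Rpower M p / t <= Rpower t sigma * Y.
Proof.
  intros Ht HM Hsp HY.
  pose proof (rp_pos t sigma). pose proof (rp_pos M p).
  apply Rle_trans with (Rpower t sigma * (Rpower M p * Rpower t p)); [|apply Rmult_le_compat_l; lra].
  replace (Rpower t sigma * (Rpower M p * Rpower t p)) with (Rpower M p * Rpower t (sigma + p))
    by (rewrite Rpower_plus; ring).
  unfold Rdiv. rewrite <- rp_inv by lra. apply Rmult_le_compat_l; [lra|]. apply rp_exp_le; lra.
Qed.

Lemma infinity sigma p u u1 u2 : HalfSol sigma p u u1 u2 ->
  (forall x, 0 < x -> 0 <= u1 x) -> (forall x, 0 < x -> x * u1 x <= u x) ->
  -2 <= sigma -> -1 - sigma <= p -> False.
Proof.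
  intros H P D Hs Hp.
  assert (Hu : forall x, 0 < x -> 0 < u x) by (intros x Hx; apply H; auto).
  assert (Hlin : forall m0, 0 < m0 -> (forall t, 1 <= t -> m0 * t <= u t) -> 0 <= p -> False).
  { intros m0 Hm0 Hb Hp0. apply (hs_LN _ _ _ _ _ H P (Rpower m0 p)); [apply rp_pos|].
    intros t Ht. apply bound_helper; auto; try lra.
    rewrite <- rp_mult_base by lra. apply rp_base_le; auto. split; [nra|]. apply Hb; auto. }
  destruct (Rlt_or_le p 0) as [Hp0|Hp0].
  -
    set (C := u 1 + u1 1).
    assert (HC : 0 < C) by (unfold C; pose proof (Hu 1 Rlt_0_1); pose proof (P 1 Rlt_0_1); lra).
    apply (hs_LN _ _ _ _ _ H P (Rpower C p)); [apply rp_pos|].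
    intros t Ht. apply bound_helper; auto; try lra.
    rewrite <- rp_mult_base by lra. apply rp_base_le_neg; [lra|]. split; [apply Hu; lra|].
    pose proof (hs_tan _ _ _ _ _ H 1 t ltac:(lra)).
    pose proof (Hu 1 Rlt_0_1); pose proof (P 1 Rlt_0_1). unfold C. nra.
  - destruct (Rle_or_lt (-1) sigma) as [Hs1|Hs1].
    +
      apply (hs_LN _ _ _ _ _ H P (Rpower (u 1) p)); [apply rp_pos|].
      intros t Ht. pose proof (rp_pos (u 1) p).
      assert (Rpower (u 1) p <= Rpower (u t) p).
      { apply rp_base_le; auto. split; [apply Hu; lra|]. apply (hs_u_nondec _ _ _ _ _ H P); lra. }
      assert (/ t <= Rpower t sigma) by (rewrite <- rp_inv by lra; apply rp_exp_le; lra).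
      assert (0 < / t) by (apply Rinv_0_lt_compat; lra).
      unfold Rdiv. rewrite Rmult_comm. apply Rmult_le_compat; lra.
    +
      set (k := / (- sigma - 1)).
      assert (Hk : 0 < k) by (unfold k; apply Rinv_0_lt_compat; lra).
      assert (K : forall x, 0 < x -> k * Rpower (u x) p * Rpower x (sigma + 1) <= u1 x)
        by (intros; apply (hs_K _ _ _ _ _ H P); auto; lra).
      assert (Q : forall x, 0 < x -> k * Rpower (u x) p * Rpower x (sigma + 2) <= u x).
      { intros x Hx. replace (sigma + 2) with ((sigma + 1) + 1) by ring. rewrite <- rp_x by auto.
        specialize (K x Hx). specialize (D x Hx). nra. }
      destruct (Rtotal_order p 1) as [Hp1|[Hp1|Hp1]].
      *
        apply (Hlin (Rpower k (/ (1 - p)))); auto; [apply rp_pos|].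
        intros t Ht.
        destruct (Rle_or_lt (Rpower k (/ (1 - p)) * t) (u t)) as [|Hlt]; auto. exfalso.
        assert (Hut : 0 < u t) by (apply Hu; lra).
        assert (Rpower (u t) (1-p) < Rpower (Rpower k (/ (1 - p)) * t) (1-p)).
        { apply Rlt_Rpower_l; [lra|]. split; auto. }
        rewrite rp_mult_base in H0 by (try apply rp_pos; lra).
        rewrite rp_inv_pow in H0 by lra.
        assert (Rpower t (1-p) <= Rpower t (sigma+2)) by (apply rp_exp_le; lra).
        specialize (Q t ltac:(lra)).
        pose proof (rp_split (u t) p Hut). pose proof (rp_pos (u t) p).
        pose proof (rp_pos (u t) (1-p)).
        assert (Rpower (u t) (1-p) * Rpower (u t) p < k * Rpower t (sigma + 2) * Rpower (u t) p).
        { apply Rmult_lt_compat_r; auto. nra. }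
        nra.
      *
        subst p.
        destruct (Rle_or_lt sigma (-2)) as [Hs2|Hs2].
        -- assert (sigma = -2) by lra. subst sigma.
           apply (Hlin (u 1)); [apply Hu; lra| |lra].
           intros t Ht.
           assert (Hk1 : k = 1) by (unfold k; replace (- -2 - 1) with 1 by ring; apply Rinv_1).
           specialize (K t ltac:(lra)). rewrite Hk1, Rpower_1 in K by (apply Hu; lra).
           replace (-2 + 1) with (-1) in K by ring. rewrite rp_inv in K by lra.
           pose proof (hs_tan' _ _ _ _ _ H 1 t ltac:(lra)).
           assert (u t <= u1 t * t).
           { replace (u t) with (1 * u t * / t * t) by (field; lra). apply Rmult_le_compat_r; lra. }
           nra.
        -- assert (k > 1).
           { unfold k. rewrite <- Rinv_1. apply Rinv_lt_contravar; lra. }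
           specialize (Q 1 Rlt_0_1). rewrite rp_one, Rpower_1 in Q by (apply Hu; lra).
           pose proof (Hu 1 Rlt_0_1). nra.
      *
        set (B := Rpower (/ k) (/ (p - 1))).
        apply (hs_LN2 _ _ _ _ _ H (k * Rpower (u 1) p) B).
        { pose proof (rp_pos (u 1) p). nra. }
        { intros t Ht. specialize (K t ltac:(lra)).
          assert (Rpower (u 1) p <= Rpower (u t) p).
          { apply rp_base_le; [lra|]. split; [apply Hu; lra|]. apply (hs_u_nondec _ _ _ _ _ H P); lra. }
          assert (/ t <= Rpower t (sigma + 1)) by (rewrite <- rp_inv by lra; apply rp_exp_le; lra).
          assert (0 < / t) by (apply Rinv_0_lt_compat; lra).
          pose proof (rp_pos (u 1) p).
          unfold Rdiv. 
          apply Rle_trans with (k * Rpower (u t) p * Rpower t (sigma + 1)); auto.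
          rewrite Rmult_assoc. rewrite (Rmult_assoc k). apply Rmult_le_compat_l; [lra|].
          apply Rmult_le_compat; lra. }
        intros t Ht.
        destruct (Rle_or_lt (u t) B) as [|Hlt]; auto. exfalso.
        assert (HB : 0 < B) by apply rp_pos.
        assert (Rpower B (p-1) < Rpower (u t) (p-1)) by (apply Rlt_Rpower_l; lra).
        unfold B in H0. rewrite rp_inv_pow in H0 by (try apply Rinv_0_lt_compat; lra).
        specialize (Q t ltac:(lra)).
        assert (1 <= Rpower t (sigma + 2)) by (rewrite <- (Rpower_O t) by lra; apply rp_exp_le; lra).
        assert (Hut : 0 < u t) by (apply Hu; lra).
        assert (E : Rpower (u t) p = Rpower (u t) (p-1) * u t).
        { pose proof (Rpower_plus (p-1) 1 (u t)) as E. rewrite Rpower_1 in E by auto.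
          replace (p-1+1) with p in E by ring. exact E. }
        rewrite E in Q. pose proof (rp_pos (u t) (p-1)).
        assert (k * (Rpower (u t) (p - 1) * u t) <= u t) by nra.
        assert (k * Rpower (u t) (p - 1) <= 1) by nra.
        assert (k * / k < k * Rpower (u t) (p - 1)) by (apply Rmult_lt_compat_l; auto).
        rewrite Rinv_r in H5 by lra. lra.
Qed.

Lemma d_id t : is_derive (fun y : R => y) t 1.
Proof. auto_derive; auto. Qed.

Lemma d_comp_inv (f f1 : R -> R) t : t <> 0 -> is_derive f (/t) (f1 (/t)) ->
  is_derive (fun t => f (/t)) t (- f1 (/t) / (t*t)).
Proof.
  intros Ht Hf.
  assert (Hi : is_derive (fun y => / y) t (- 1 / t ^ 2)).
  { apply (is_derive_inv (fun y => y) t 1); auto. apply d_id. }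
  pose proof (is_derive_comp f (fun y => / y) t _ _ Hf Hi) as Hc.
  replace (- f1 (/ t) / (t * t)) with (scal (- 1 / t ^ 2) (f1 (/ t))); auto.
  unfold scal; simpl; unfold mult; simpl. field. auto.
Qed.

Ltac fld := try (unfold scal; simpl); try (unfold minus, plus, opp, mult; simpl); match goal with |- @eq _ ?a ?b => change (@eq R a b) end; field.

Lemma d_eq (f : R -> R) x l l' : is_derive f x l -> l = l' -> is_derive f x l'.
Proof. intros; subst; auto. Qed.

Lemma d_mult (f g : R -> R) df dg t : is_derive f t df -> is_derive g t dg ->
  is_derive (fun t => f t * g t) t (df * g t + f t * dg).
Proof. intros. apply (is_derive_mult f g t df dg); auto. intros; apply Rmult_comm. Qed.

Lemma rp_inv_base t a : 0 < t -> Rpower (/ t) a = Rpower t (- a).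
Proof. intros. unfold Rpower. rewrite ln_Rinv by auto. f_equal; ring. Qed.

Lemma rp_m3 t : 0 < t -> Rpower t (-3) = / (t * t * t).
Proof. intros. replace (-3) with (- INR 3) by (simpl; ring). rewrite Rpower_Ropp, Rpower_pow by auto.
  f_equal. ring. Qed.

Lemma kelvin sigma p u u1 u2 : HalfSol sigma p u u1 u2 ->
  (forall x, 0 < x -> 0 <= u1 x) -> (forall x, 0 < x -> x * u1 x <= u x) ->
  sigma <= -2 -> p <= -1 - sigma -> False.
Proof.
  intros H P D Hs Hp.
  apply (infinity (-3 - sigma - p) p (fun t => t * u (/t)) (fun t => u (/t) - u1 (/t) * / t)
     (fun t => u2 (/t) * / (t * t * t))); try lra.
  - intros t Ht.
    assert (Hit : 0 < / t) by (apply Rinv_0_lt_compat; auto).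
    destruct (H (/t) Hit) as [Du [Du1 [Hu E]]].
    split; [|split; [|split]].
    + eapply d_eq; [apply (d_mult (fun t => t) (fun t => u (/t)) 1 (- u1 (/t) / (t*t)))|].
      * apply d_id.
      * apply d_comp_inv; auto; lra.
      * fld. lra.
    + eapply d_eq; [apply (is_derive_minus (fun t => u (/t)) (fun t => u1 (/ t) * / t))|].
      * apply (d_comp_inv u u1); auto; lra.
      * apply (d_mult (fun t => u1 (/t)) (fun t => / t)).
        -- apply (d_comp_inv u1 u2); auto; lra.
        -- apply (is_derive_inv (fun y => y) t 1); [apply d_id|lra].
      * fld. lra.
    + apply Rmult_lt_0_compat; auto.
    + rewrite E. rewrite rp_mult_base by auto. rewrite rp_inv_base by auto.
      replace (-3 - sigma - p) with (-3 + (- sigma + - p)) by ring.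
      rewrite !Rpower_plus, rp_m3 by auto. rewrite (Rpower_Ropp t p).
      pose proof (rp_pos t p). field. lra.
  - intros t Ht. assert (Hit : 0 < / t) by (apply Rinv_0_lt_compat; auto).
    specialize (D (/t) Hit). lra.
  - intros t Ht. assert (Hit : 0 < / t) by (apply Rinv_0_lt_compat; auto).
    specialize (P (/t) Hit).
    replace (t * (u (/ t) - u1 (/ t) * / t)) with (t * u (/ t) - u1 (/t)) by (field; lra). lra.
Qed.

Lemma cont_eps (u : R -> R) : continuous u 0 -> forall e, 0 < e -> exists d, 0 < d /\ forall y, Rabs y < d -> Rabs (u y - u 0) < e.
Proof.
  intros Hc e He.
  destruct (proj1 (filterlim_locally u (u 0)) Hc (mkposreal e He)) as [d Hd].
  exists d. split; [apply cond_pos|]. intros y Hy.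
  assert (ball 0 d y). { unfold ball; simpl. unfold AbsRing_ball, abs, minus, plus, opp; simpl. rewrite Ropp_0, Rplus_0_r. auto. }
  specialize (Hd y H). unfold ball in Hd; simpl in Hd. unfold AbsRing_ball, abs, minus, plus, opp in Hd; simpl in Hd. auto.
Qed.

Definition WSol (u u1 u2 : R -> R) : Prop :=
  forall x, 0 < x -> is_derive u x (u1 x) /\ is_derive u1 x (u2 x) /\ u2 x <= 0.

Lemma w_noninc u u1 u2 : WSol u u1 u2 -> forall x y, 0 < x <= y -> u1 y <= u1 x.
Proof. intros H x y Hxy. apply (mono_dec u1 u2); try lra.
  - intros t Ht. apply H; lra.
  - intros t Ht. apply H; lra. Qed.

Lemma w_tan u u1 u2 : WSol u u1 u2 -> forall x y, 0 < x <= y -> u y <= u x + u1 x * (y - x).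
Proof. intros H x y Hxy.
  assert (u y - u1 x * y <= u x - u1 x * x); [|lra].
  apply (mono_dec (fun t => u t - u1 x * t) (fun t => u1 t - u1 x)); try lra.
  - intros t Ht. apply (is_derive_minus u (fun t => u1 x * t)). apply H; lra. apply is_derive_lin.
  - intros t Ht. assert (u1 t <= u1 x) by (apply (w_noninc _ _ _ H); lra). lra.
Qed.

Lemma w_tan' u u1 u2 : WSol u u1 u2 -> forall x y, 0 < x <= y -> u x + u1 y * (y - x) <= u y.
Proof. intros H x y Hxy.
  assert (u x - u1 y * x <= u y - u1 y * y); [|lra].
  apply (mono_inc (fun t => u t - u1 y * t) (fun t => u1 t - u1 y)); try lra.
  - intros t Ht. apply (is_derive_minus u (fun t => u1 y * t)). apply H; lra. apply is_derive_lin.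
  - intros t Ht. assert (u1 y <= u1 t) by (apply (w_noninc _ _ _ H); lra). lra.
Qed.

Lemma half_line sigma p u u1 u2 :
  sigma < 0 -> continuous u 0 ->
  (forall x, 0 <= x -> 0 <= u x) ->
  (forall x, 0 < x -> is_derive u x (u1 x) /\ is_derive u1 x (u2 x) /\ (p < 0 -> 0 < u x) /\
      u2 x = - (Rpower x sigma * rpow (u x) p)) ->
  (exists a, 0 <= a /\ 0 < u a) ->
  (sigma < -2 /\ p > -1 - sigma) \/ (-2 < sigma < 0 /\ p < -1 - sigma).
Proof.
  intros Hs Hc Hnn Hsol [a [Ha Hua]].
  assert (W : WSol u u1 u2).
  { intros x Hx. destruct (Hsol x Hx) as [D1 [D2 [_ E]]]. split; [auto|split; auto].
    rewrite E. pose proof (rp_pos x sigma). pose proof (rpow_nonneg (u x) p). nra. }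
  assert (P : forall x, 0 < x -> 0 <= u1 x).
  { intros x Hx. destruct (Rle_or_lt 0 (u1 x)) as [|Hlt]; auto. exfalso.
    set (y := x + (u x + 1) / (- u1 x)).
    assert (Hux : 0 <= u x) by (apply Hnn; lra).
    assert (0 <= (u x + 1) / (- u1 x)) by (apply Rmult_le_pos; [lra|left; apply Rinv_0_lt_compat; lra]).
    pose proof (w_tan _ _ _ W x y ltac:(unfold y; lra)).
    assert (u1 x * (y - x) = - (u x + 1)) by (unfold y; field; lra).
    assert (0 <= u y) by (apply Hnn; unfold y; lra). lra. }
  assert (D0 : forall x, 0 < x -> u 0 <= u x - x * u1 x).
  { intros x Hx. destruct (Rle_or_lt (u 0) (u x - x * u1 x)) as [|Hlt]; auto. exfalso.
    set (e := u 0 - (u x - x * u1 x)).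
    destruct (cont_eps u Hc (e/2) ltac:(unfold e; lra)) as [d [Hd Hdy]].
    pose proof (P x Hx) as Px.
    set (y := Rmin (x/2) (Rmin (d/2) (e / (2*(u1 x + 1))))).
    assert (He2 : 0 < e / (2*(u1 x + 1))) by (apply Rdiv_lt_0_compat; unfold e; lra).
    assert (Hy1 : y <= x/2) by apply Rmin_l.
    assert (Hy2 : y <= d/2) by (eapply Rle_trans; [apply Rmin_r|apply Rmin_l]).
    assert (Hy3 : y <= e / (2*(u1 x + 1))) by (eapply Rle_trans; [apply Rmin_r|apply Rmin_r]).
    assert (Hy0 : 0 < y) by (unfold y; repeat apply Rmin_glb_lt; lra).
    pose proof (w_tan' _ _ _ W y x ltac:(lra)).
    assert (u1 x * y <= e / 2).
    { apply Rle_trans with (u1 x * (e / (2 * (u1 x + 1)))); [apply Rmult_le_compat_l; lra|].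
      replace (u1 x * (e / (2 * (u1 x + 1)))) with (e/2 * (u1 x / (u1 x + 1))) by (field; lra).
      assert (u1 x / (u1 x + 1) <= 1).
      { apply Rmult_le_reg_r with (u1 x + 1); [lra|]. unfold Rdiv. rewrite Rmult_assoc, Rinv_l by lra. lra. }
      unfold e in *. nra. }
    specialize (Hdy y ltac:(rewrite Rabs_pos_eq; lra)).
    pose proof (Rle_abs (u y - u 0)). pose proof (Rabs_Ropp (u y - u 0)). pose proof (Rle_abs (- (u y - u 0))).
    unfold e in *. lra. }
  assert (Pos : forall x, 0 < x -> 0 < u x).
  { destruct (Rlt_or_le p 0) as [Hp|Hp]; [intros x Hx; apply Hsol; auto|].
    intros b Hb. destruct (Rlt_or_le 0 (u b)) as [|Hle]; auto. exfalso.
    assert (Hub : u b = 0) by (pose proof (Hnn b ltac:(lra)); lra).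
    assert (Hu1b : u1 b = 0).
    { destruct (P b Hb) as [Hlt|]; auto. exfalso.
      pose proof (w_tan' _ _ _ W (b/2) b ltac:(lra)).
      pose proof (Hnn (b/2) ltac:(lra)). nra. }
    assert (Z : forall x, 0 < x -> u x = 0).
    { intros x Hx. destruct (Rle_or_lt b x).
      - pose proof (w_tan _ _ _ W b x ltac:(lra)). pose proof (Hnn x ltac:(lra)). nra.
      - assert (u x <= u b).
        { apply (mono_inc u u1); try lra. intros t Ht; apply W; lra. intros t Ht; apply P; lra. }
        pose proof (Hnn x ltac:(lra)). lra. }
    pose proof (D0 b Hb) as Db. rewrite Hub, Hu1b in Db. pose proof (Hnn 0 ltac:(lra)).
    destruct (Req_dec a 0) as [->|Ha0]; [lra|]. rewrite Z in Hua by lra. lra. }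
  assert (HS : HalfSol sigma p u u1 u2).
  { intros x Hx. destruct (Hsol x Hx) as [D1 [D2 [_ E]]]. split; [auto|split; [auto|split]]; auto.
    rewrite E, rpow_pos; auto. }
  assert (D : forall x, 0 < x -> x * u1 x <= u x).
  { intros x Hx. pose proof (D0 x Hx). pose proof (Hnn 0 ltac:(lra)). lra. }
  pose proof (infinity sigma p u u1 u2 HS P D) as I1.
  pose proof (kelvin sigma p u u1 u2 HS P D) as I2.
  destruct (Rtotal_order sigma (-2)) as [H1|[H1|H1]];
  destruct (Rtotal_order p (-1 - sigma)) as [H2|[H2|H2]]; try lra;
  exfalso; first [apply I1; lra | apply I2; lra].
Qed.

Lemma sq_abs y : y * y = Rabs y * Rabs y.
Proof. unfold Rabs; destruct Rcase_abs; ring. Qed.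

Lemma rp_sq y a : y <> 0 -> Rpower (y * y) (a / 2) = Rpower (Rabs y) a.
Proof. intros. pose proof (Rabs_pos_lt y H). rewrite sq_abs. unfold Rpower. rewrite ln_mult by auto.
  f_equal. field. Qed.

Lemma loc_nz x : x <> 0 -> locally x (fun y => y <> 0).
Proof.
  intros Hx. exists (mkposreal (Rabs x) (Rabs_pos_lt x Hx)). intros y Hy Hy0.
  unfold ball in Hy; simpl in Hy. unfold AbsRing_ball, abs, minus, plus, opp in Hy; simpl in Hy.
  subst y. rewrite Rplus_0_l, Rabs_Ropp in Hy. lra.
Qed.

Lemma d_sqpow b x : x <> 0 -> is_derive (fun y => Rpower (y * y) b) x (b * Rpower (x * x) (b - 1) * (2 * x)).
Proof.
  intros Hx. assert (Hxx : 0 < x * x) by (pose proof (Rabs_pos_lt x Hx); rewrite sq_abs; nra).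
  pose proof (is_derive_comp (fun t => Rpower t b) (fun y => y * y) x _ (2 * x) (is_derive_rp b (x*x) Hxx)) as H.
  eapply d_eq; [apply H|].
  - eapply d_eq; [apply (d_mult (fun y => y) (fun y => y)); apply d_id|]. fld.
  - fld.
Qed.

Lemma exist_sol p sigma :
  ((sigma < -2 /\ p > -1 - sigma) \/ (-2 < sigma < 0 /\ p < -1 - sigma)) ->
  exists u : R -> R, classical_solution p sigma u /\ (forall x, 0 <= u x) /\ (exists x, u x <> 0).
Proof.
  intros Hc.
  assert (Hp1 : p - 1 <> 0) by (destruct Hc; lra).
  assert (Hs : sigma < 0) by (destruct Hc; lra).
  set (al := (sigma + 2) / (1 - p)).
  assert (Hal : 0 < al < 1).
  { unfold al. destruct Hc as [[H1 H2]|[H1 H2]].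
    - replace ((sigma + 2) / (1 - p)) with ((- sigma - 2) / (p - 1)) by (field; lra).
      split; [apply Rdiv_lt_0_compat; lra|].
      apply Rmult_lt_reg_r with (p - 1); [lra|]. unfold Rdiv. rewrite Rmult_assoc, Rinv_l by lra. lra.
    - split; [apply Rdiv_lt_0_compat; lra|].
      apply Rmult_lt_reg_r with (1 - p); [lra|]. unfold Rdiv. rewrite Rmult_assoc, Rinv_l by lra. lra. }
  assert (Hrel : al * (1 - p) = sigma + 2) by (unfold al; field; lra).
  set (K := al * (1 - al)). assert (HK : 0 < K) by (unfold K; nra).
  set (c := Rpower K (/ (p - 1))). assert (Hcp : 0 < c) by apply rp_pos.
  set (u := fun x => c * rpow (Rabs x) al).
  set (u1 := fun x => c * al * x * Rpower (x * x) (al / 2 - 1)).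
  set (u2 := fun x => c * al * (al - 1) * Rpower (x * x) (al / 2 - 1)).
  assert (Uloc : forall x, x <> 0 -> locally x (fun y => c * Rpower (y * y) (al / 2) = u y)).
  { intros x Hx. apply (filter_imp (fun y => y <> 0)); [|apply loc_nz; auto].
    intros y Hy. unfold u. rewrite rp_sq by auto. rewrite rpow_pos; auto. apply Rabs_pos_lt; auto. }
  assert (Du : forall x, x <> 0 -> is_derive u x (u1 x)).
  { intros x Hx. eapply is_derive_ext_loc; [apply Uloc; auto|].
    eapply d_eq; [apply (is_derive_scal (fun y => Rpower (y*y) (al/2))); apply d_sqpow; auto|].
    unfold u1. fld. }
  assert (Du1 : forall x, x <> 0 -> is_derive u1 x (u2 x)).
  { intros x Hx. assert (Hxx : 0 < x * x) by (pose proof (Rabs_pos_lt x Hx); rewrite sq_abs; nra).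
    unfold u1, u2.
    eapply d_eq; [apply (d_mult (fun y => c * al * y) (fun y => Rpower (y * y) (al / 2 - 1)));
       [apply is_derive_lin| apply d_sqpow; auto]|].
    replace (Rpower (x * x) (al / 2 - 1)) with (x * x * Rpower (x * x) (al / 2 - 1 - 1)).
    - fld.
    - rewrite rp_x by auto. f_equal. ring. }
  exists u. split; [split|split].
  -
    intros x. destruct (Req_dec x 0) as [->|Hx].
    + apply filterlim_locally. intros eps.
      assert (Hu0 : u 0 = 0) by (unfold u, rpow; rewrite Rabs_R0; destruct Req_EM_T; [|lra]; destruct Req_EM_T; [lra|ring]).
      set (d := Rpower (eps / c) (/ al)).
      exists (mkposreal d (rp_pos _ _)). intros y Hy.
      unfold ball in Hy |- *; simpl in Hy |- *. unfold AbsRing_ball, abs, minus, plus, opp in Hy |- *; simpl in Hy |- *.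
      rewrite Ropp_0, Rplus_0_r in Hy. rewrite Hu0, Ropp_0, Rplus_0_r.
      destruct (Req_dec y 0) as [->|Hy0]; [rewrite Hu0, Rabs_R0; apply cond_pos|].
      unfold u. rewrite rpow_pos by (apply Rabs_pos_lt; auto).
      rewrite Rabs_pos_eq by (pose proof (rp_pos (Rabs y) al); nra).
      assert (Rpower (Rabs y) al < Rpower d al) by (apply Rlt_Rpower_l; [lra|split; auto; apply Rabs_pos_lt; auto]).
      unfold d in H. rewrite rp_inv_pow in H by (try apply Rdiv_lt_0_compat; try apply cond_pos; lra).
      pose proof (cond_pos eps).
      replace (pos eps) with (c * (eps / c)) by (field; lra). apply Rmult_lt_compat_l; auto.
    + apply continuity_pt_filterlim, derivable_continuous_pt. exists (u1 x). apply is_derive_Reals, Du; auto.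
  - exists u1, u2. split.
    + intros x [Hx|Hx]; [lra|]. split; [apply Du; auto|split; [apply Du1; auto|]].
      apply continuity_pt_filterlim, derivable_continuous_pt. exists (c * al * (al - 1) * ((al / 2 - 1) * Rpower (x * x) (al / 2 - 1 - 1) * (2 * x))).
      apply is_derive_Reals. unfold u2. apply (is_derive_scal (fun y => Rpower (y * y) (al / 2 - 1))). apply d_sqpow; auto.
    + intros x [Hx|Hx]; [lra|].
      assert (Ha : 0 < Rabs x) by (apply Rabs_pos_lt; auto).
      assert (Hux : 0 < u x) by (unfold u; rewrite rpow_pos by auto; pose proof (rp_pos (Rabs x) al); nra).
      split; [auto|].
      rewrite !rpow_pos by auto. unfold u2.
      replace (al / 2 - 1) with ((al - 2) / 2) by field. rewrite rp_sq by auto.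
      unfold u. rewrite rpow_pos by auto. rewrite rp_mult_base by (auto; apply rp_pos).
      rewrite Rpower_mult.
      assert (Ec : Rpower c p = K * c).
      { pose proof (Rpower_plus (p-1) 1 c) as E. rewrite Rpower_1 in E by auto.
        replace (p - 1 + 1) with p in E by ring. rewrite E. unfold c at 1. rewrite rp_inv_pow by auto. auto. }
      rewrite Ec.
      replace (al - 2) with (sigma + al * p) by lra. rewrite Rpower_plus. unfold K. ring.
  - intros x. unfold u. pose proof (rpow_nonneg (Rabs x) al). nra.
  - exists 1. unfold u. rewrite Rabs_R1, rpow_pos by lra. rewrite rp_one. lra.
Qed.

Lemma whole_line p sigma (u u1 u2 : R -> R) : 0 <= sigma ->
  (forall x, 0 <= u x) -> (exists x, u x <> 0) ->
  (forall x, is_derive u x (u1 x) /\ is_derive u1 x (u2 x)) ->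
  (forall x, - u2 x = rpow (Rabs x) sigma * rpow (u x) p) -> False.
Proof.
  intros Hs Hnn [x0 Hx0] Hd He.
  assert (Hu2 : forall x, u2 x <= 0).
  { intros x. pose proof (He x). pose proof (rpow_nonneg (Rabs x) sigma). pose proof (rpow_nonneg (u x) p). nra. }
  assert (Hni : forall x y, x <= y -> u1 y <= u1 x).
  { intros x y Hxy. apply (mono_dec u1 u2); auto. intros; apply Hd. }
  assert (Htan : forall a y, u y <= u a + u1 a * (y - a)).
  { intros a y. destruct (Rle_or_lt a y).
    - assert (u y - u1 a * y <= u a - u1 a * a); [|lra].
      apply (mono_dec (fun t => u t - u1 a * t) (fun t => u1 t - u1 a)); auto.
      + intros t Ht. apply (is_derive_minus u (fun t => u1 a * t)). apply Hd. apply is_derive_lin.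
      + intros t Ht. pose proof (Hni a t ltac:(lra)). lra.
    - assert (u y - u1 a * y <= u a - u1 a * a); [|lra].
      apply (mono_inc (fun t => u t - u1 a * t) (fun t => u1 t - u1 a)); try lra.
      + intros t Ht. apply (is_derive_minus u (fun t => u1 a * t)). apply Hd. apply is_derive_lin.
      + intros t Ht. pose proof (Hni t a ltac:(lra)). lra. }
  assert (Z1 : forall a, u1 a = 0).
  { intros a. destruct (Rtotal_order (u1 a) 0) as [H|[H|H]]; auto; exfalso.
    - set (y := a + (u a + 1) / (- u1 a)).
      pose proof (Htan a y). pose proof (Hnn y). pose proof (Hnn a).
      assert (u1 a * (y - a) = - (u a + 1)) by (unfold y; field; lra). lra.
    - set (y := a - (u a + 1) / (u1 a)).
      pose proof (Htan a y). pose proof (Hnn y). pose proof (Hnn a).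
      assert (u1 a * (y - a) = - (u a + 1)) by (unfold y; field; lra). lra. }
  assert (Hc : forall x, u x = u 1).
  { intros x. pose proof (Htan 1 x). pose proof (Htan x 1). rewrite !Z1 in *. lra. }
  assert (Z2 : u2 1 = 0).
  { assert (is_derive u1 1 0).
    { apply (is_derive_ext (fun _ => 0)); [intros; symmetry; apply Z1|]. auto_derive; auto. }
    pose proof (is_derive_unique _ _ _ H). pose proof (is_derive_unique _ _ _ (proj2 (Hd 1))). lra. }
  pose proof (He 1). rewrite Z2, Rabs_R1, rpow_pos, rp_one in H by lra.
  destruct (Hnn 1) as [Hp|Hz].
  - rewrite rpow_pos in H by auto. pose proof (rp_pos (u 1) p). lra.
  - apply Hx0. rewrite Hc. auto.
Qed.

Theorem theorem1p2 (p sigma : R) :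
  (exists u : R -> R,
      classical_solution p sigma u /\
      (forall x, 0 <= u x) /\
      (exists x, u x <> 0))
  <->
  ((sigma < -2 /\ p > -1 - sigma) \/ (-2 < sigma < 0 /\ p < -1 - sigma)).
Proof.
  split; [|apply exist_sol].
  intros [u [[Hc [u1 [u2 [HC2 Heq]]]] [Hnn [x0 Hx0]]]].
  destruct (Rle_or_lt 0 sigma) as [Hs|Hs].
  - exfalso. apply (whole_line p sigma u u1 u2); eauto.
    + intros x. destruct (HC2 x (or_introl Hs)) as [A1 [A2 _]]. auto.
    + intros x. apply (Heq x (or_introl Hs)).
  - destruct (Rle_or_lt 0 x0) as [Hx|Hx].
    + apply (half_line sigma p u u1 u2); auto.
      * intros x Hx'. assert (Hd : eq_domain sigma x) by (right; lra).
        destruct (HC2 x Hd) as [A1 [A2 _]]. destruct (Heq x Hd) as [E1 E2].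
        split; [auto|split; [auto|split; [auto|]]].
        rewrite Rabs_pos_eq, rpow_pos in E2 by lra. lra.
      * exists x0. split; auto. pose proof (Hnn x0). lra.
    + apply (half_line sigma p (fun x => u (- x)) (fun x => - u1 (- x)) (fun x => u2 (- x))); auto.
      * apply (continuous_comp (fun x => - x) u). apply continuity_pt_filterlim, derivable_continuous_pt. exists (-1).
        apply is_derive_Reals. auto_derive; auto; ring.
        rewrite Ropp_0. apply Hc.
      * intros x Hx'. assert (Hd : eq_domain sigma (- x)) by (right; lra).
        destruct (HC2 (- x) Hd) as [A1 [A2 _]]. destruct (Heq (- x) Hd) as [E1 E2].
        assert (Dn : is_derive (fun y : R => - y) x (-1)) by (auto_derive; auto; ring).
        split; [|split; [|split; [auto|]]].
        -- eapply d_eq; [apply (is_derive_comp u (fun y => - y) x _ _ A1 Dn)|]. fld.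
        -- eapply d_eq; [apply (is_derive_opp (fun x => u1 (- x))); apply (is_derive_comp u1 (fun y => - y) x _ _ A2 Dn)|]. fld.
        -- rewrite Rabs_Ropp, Rabs_pos_eq, rpow_pos in E2 by lra. lra.
      * exists (- x0). split; [lra|]. rewrite Ropp_involutive. pose proof (Hnn x0). lra.
Qed.
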